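(* Let $C_1$ and $C_2$ be maximal configurations of finite labeled prime event structures $\mathcal{E}_1$ and $\mathcal{E}_2$ with labelings $h_1,h_2$, and suppose that for every $e_1\in C_1$ and $e_2\in C_2$ we have $|\{e\in C_1\mid h_1(e_1)=h_1(e)\}|=1$ and $|\{e\in C_2\mid h_2(e_2)=h_2(e)\}|=1$. If $\mathcal{L}(C_1)\subseteq\mathcal{L}(C_2)$, then $C_1\sqsubset_S C_2$.
   Context: A finite $\mathcal{X}$-labeled prime event structure is $\langle E,<,\#,h\rangle$ with finite $E$, strict partial order $<$, labeling $h:E\to\mathcal{X}$, and symmetric irreflexive conflict relation $\#$ closed under $<$; $\mathcal{X}$ contains $\varepsilon$ denoting the empty word; there is an event $\bot$ below all other events with $h(\bot)=\varepsilon$. A configuration is a left-closed, conflict-free subset of $E$; maximal if no configuration strictly contains it. A trace of a configuration $C$ lists every event of $C$ exactly once such that $e_i<e_j$ implies $i<j$; $\mathcal{L}(C)=\{h(t)\mid t$ a trace of $C\}$ (labels pointwise, $\varepsilon$ omitted). With causal orders $<_1,<_2$, a sufficient embedding $\varphi:C_1\to C_2$ is a bijection with $h_1(e)=h_2(\varphi(e))$ for all $e\in C_1$ and such that $\varphi(e_1)<_2\varphi(e_2)$ implies $e_1<_1e_2$; $C_1\sqsubset_S C_2$ means such an embedding exists. *)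

(* Defs.v *)
From mathcomp Require Import all_boot.
Set Implicit Arguments. Unset Strict Implicit. Unset Printing Implicit Defensive.

(* A finite X-labeled prime event structure; [eps] is the label denoting the
   empty word. *)
Record pes (X : eqType) (eps : X) := Pes {
  ev :> finType;
  lt_ev : rel ev;
  cf_ev : rel ev;
  lab : ev -> X;
  bot : ev;
  lt_irr : forall e, ~~ lt_ev e e;
  lt_trans : forall e1 e2 e3, lt_ev e1 e2 -> lt_ev e2 e3 -> lt_ev e1 e3;
  cf_sym : forall e1 e2, cf_ev e1 e2 = cf_ev e2 e1;
  cf_irr : forall e, ~~ cf_ev e e;
  cf_hered : forall e1 e2 e3, cf_ev e1 e2 -> lt_ev e2 e3 -> cf_ev e1 e3;
  bot_least : forall e, e != bot -> lt_ev bot e;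
  bot_lab : lab bot = eps
}.

Section Defs.
Variables (X : eqType) (eps : X).

Definition is_config (E : pes eps) (C : {set E}) : Prop :=
  (forall e e', e' \in C -> lt_ev e e' -> e \in C) /\
  (forall e e', e \in C -> e' \in C -> ~~ cf_ev e e').

Definition is_max_config (E : pes eps) (C : {set E}) : Prop :=
  is_config C /\ forall C', is_config C' -> C \subset C' -> C' = C.

Definition is_trace (E : pes eps) (C : {set E}) (t : seq E) : Prop :=
  uniq t /\ (forall e, (e \in t) = (e \in C)) /\
  (forall (d : E) i j, i < size t -> j < size t ->
     lt_ev (nth d t i) (nth d t j) -> i < j).

Definition word (E : pes eps) (t : seq E) : seq X :=
  [seq x <- map (@lab _ _ E) t | x != eps].

Definition lang (E : pes eps) (C : {set E}) (w : seq X) : Prop :=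
  exists t, is_trace C t /\ word t = w.

Definition suff_embedding (E1 E2 : pes eps) (C1 : {set E1}) (C2 : {set E2})
  (phi : E1 -> E2) : Prop :=
  {in C1 &, injective phi} /\ phi @: C1 = C2 /\
  {in C1, forall e, lab e = lab (phi e)} /\
  {in C1 &, forall e1 e2, lt_ev (phi e1) (phi e2) -> lt_ev e1 e2}.

Definition suff_embeds (E1 E2 : pes eps) (C1 : {set E1}) (C2 : {set E2}) :
  Prop := exists phi : E1 -> E2, suff_embedding C1 C2 phi.

End Defs.

(* Main.v *)
Require Import Defs.
From mathcomp Require Import all_boot.
Set Implicit Arguments. Unset Strict Implicit. Unset Printing Implicit Defensive.

Section H.
Variables (X : eqType) (eps : X) (E : pes eps).

Lemma lt_bot (e : E) : ~~ lt_ev e (bot E).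
Proof.
apply/negP => H.
have [/eqP He|Hne] := boolP (e == bot E).
  by move: H; rewrite He (negbTE (lt_irr _)).
by move: (lt_trans (bot_least Hne) H); rewrite (negbTE (lt_irr _)).
Qed.

Lemma bot_in (C : {set E}) : is_max_config C -> bot E \in C.
Proof.
move=> [[Hl Hc] Hm].
have Hcfg : is_config (bot E |: C).
  split.
    move=> e e'; rewrite !inE => /orP[/eqP ->|He'] Hlt.
      by move: Hlt; rewrite (negbTE (lt_bot e)).
    by rewrite (Hl _ _ He' Hlt) orbT.
  have Hb : forall e, ~~ cf_ev (bot E) e.
    move=> e; apply/negP => Hcf.
    have [/eqP He|Hne] := boolP (e == bot E).
      by move: Hcf; rewrite He (negbTE (cf_irr _)).
    have Hcf' : cf_ev e (bot E) by rewrite cf_sym.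
    by move: (cf_hered Hcf' (bot_least Hne)); rewrite (negbTE (cf_irr _)).
  move=> e e'; rewrite !inE => /orP[/eqP ->|He] /orP[/eqP ->|He'] //.
  - by rewrite cf_sym.
  - exact: Hc.
have := Hm _ Hcfg (subsetUr _ _) => <-.
by rewrite setU11.
Qed.

Lemma uniq_lab (C : {set E}) :
  (forall e1, e1 \in C -> #|[set e in C | lab e1 == lab e]| = 1) ->
  {in C &, injective (@lab _ _ E)}.
Proof.
move=> H x y Hx Hy Hxy.
have /card_le1_eqP Hle : #|[set e in C | lab x == lab e]| <= 1 by rewrite H.
have := Hle x y; rewrite !inE Hx Hy Hxy eqxx => /(_ isT isT) //.
Qed.

Definition npred (x : E) := #|[set y | lt_ev y x]|.

Lemma npred_lt x y : lt_ev x y -> npred x < npred y.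
Proof.
move=> Hxy; apply: proper_card; apply/properP; split.
  by apply/subsetP => z; rewrite !inE => Hz; apply: lt_trans Hz Hxy.
by exists x; rewrite !inE ?Hxy ?(negbTE (lt_irr _)).
Qed.

Lemma trace_of_key (key : E -> nat) (C : {set E}) :
  (forall x y, lt_ev x y -> key x < key y) ->
  let t := sort (fun x y => key x <= key y) (enum C) in
  is_trace C t /\ forall x y, x \in C -> y \in C -> key x < key y -> index x t < index y t.
Proof.
move=> Hk t.
have Hs : sorted (fun x y => key x <= key y) t.
  by apply: sort_sorted => x y; apply: leq_total.
have Hidx : forall x y, x \in C -> y \in C -> key x < key y -> index x t < index y t.
  move=> x y Hx Hy Hlt; rewrite ltnNge; apply/negP => Hle.
  have Htr : transitive (fun x y : E => key x <= key y) by move=> a b c; apply: leq_trans.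
  have Hrf : reflexive (fun x y : E => key x <= key y) by move=> a.
  have := @sorted_leq_index _ _ Htr Hrf _ Hs y x.
  rewrite !mem_sort !mem_enum /= => /(_ Hy Hx Hle).
  by rewrite leqNgt Hlt.
have Hm : forall e, (e \in t) = (e \in C) by move=> e; rewrite mem_sort mem_enum.
split=> //; split; first by rewrite sort_uniq enum_uniq.
split=> // d i j Hi Hj Hlt.
have Ht : uniq t by rewrite sort_uniq enum_uniq.
have := Hidx (nth d t i) (nth d t j).
rewrite -!Hm !mem_nth // !index_uniq //; apply => //.
exact: Hk.
Qed.

Lemma word_index (t : seq E) x y :
  uniq (word t) -> x \in t -> y \in t -> lab x != eps -> lab y != eps ->
  index x t < index y t -> index (lab x) (word t) < index (lab y) (word t).
Proof.
elim: t => //= a t IH Hu Hx Hy Hlx Hly.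
have Hw : forall z, z \in t -> lab z != eps -> lab z \in word t.
  by move=> z Hz Hl; rewrite /word mem_filter Hl map_f.
rewrite /word /= -/(word t) in Hu *.
have [Hax|Hax] := eqVneq a x.
  subst a; have [Hay|Hay] := eqVneq x y; first by subst y; rewrite ltnn.
  move=> _; rewrite Hlx /= eqxx.
  move: Hu; rewrite Hlx /= => /andP[Hn _].
  case: eqP => // Hl.
  move: Hy; rewrite inE eq_sym (negbTE Hay) /= => Hy.
  by move: Hn; rewrite Hl Hw.
have [Hay|Hay] := eqVneq a y; first by [].
rewrite ltnS => Hlt.
move: Hx Hy; rewrite !inE eq_sym (negbTE Hax) eq_sym (negbTE Hay) /= => Hx Hy.
case: ifP => Hla /=.
  move: Hu; rewrite Hla /= => /andP[Hn Hu].
  have Hx' : (lab a == lab x) = false by apply/negbTE; apply: contraNneq Hn => ->; rewrite Hw.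
  have Hy' : (lab a == lab y) = false by apply/negbTE; apply: contraNneq Hn => ->; rewrite Hw.
  by rewrite Hx' Hy' ltnS IH.
by rewrite Hla in Hu; rewrite IH.
Qed.

End H.

Lemma uniq_word (X : eqType) (eps : X) (E : pes eps) (C : {set E}) t :
  {in C &, injective (@lab _ _ E)} -> is_trace C t -> uniq (word t).
Proof.
move=> Hi [Hu [Hm _]]; rewrite /word filter_uniq // map_inj_in_uniq //.
by move=> x y; rewrite !Hm; apply: Hi.
Qed.

Lemma in_word (X : eqType) (eps : X) (E : pes eps) (t : seq E) e :
  e \in t -> lab e != eps -> lab e \in word t.
Proof. by move=> He Hl; rewrite /word mem_filter Hl map_f. Qed.

Lemma word_in (X : eqType) (eps : X) (E : pes eps) (t : seq E) x :
  x \in word t -> exists2 e, e \in t & lab e = x.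
Proof.
rewrite /word mem_filter => /andP[_ /mapP[e He ->]]; by exists e.
Qed.

Theorem lemma10 (X : eqType) (eps : X) (E1 E2 : pes eps)
  (C1 : {set E1}) (C2 : {set E2}) :
  is_max_config C1 -> is_max_config C2 ->
  (forall e1, e1 \in C1 -> #|[set e in C1 | lab e1 == lab e]| = 1) ->
  (forall e2, e2 \in C2 -> #|[set e in C2 | lab e2 == lab e]| = 1) ->
  (forall w, lang C1 w -> lang C2 w) ->
  suff_embeds C1 C2.
Proof.
move=> Hm1 Hm2 Hu1 Hu2 HL.
have inj1 := uniq_lab Hu1; have inj2 := uniq_lab Hu2.
have b1 := bot_in Hm1; have b2 := bot_in Hm2.
have eps1 : forall e, e \in C1 -> lab e = eps -> e = bot E1.
  by move=> e He Hl; apply: inj1 => //; rewrite Hl bot_lab.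
have eps2 : forall e, e \in C2 -> lab e = eps -> e = bot E2.
  by move=> e He Hl; apply: inj2 => //; rewrite Hl bot_lab.
have [Ht1 _] := trace_of_key C1 (@npred_lt _ _ E1).
have [t2 [Ht2 Hw]] := HL _ (ex_intro _ _ (conj Ht1 erefl)).
have ex12 : forall e, e \in C1 -> exists2 e', e' \in C2 & lab e' = lab e.
  move=> e He; have [Hl|Hl] := eqVneq (lab e) eps.
    by exists (bot E2); rewrite // bot_lab Hl.
  have : lab e \in word t2 by rewrite Hw; apply: in_word => //; case: Ht1 => _ [-> _].
  by case/word_in => e' He' <-; exists e' => //; case: Ht2 => _ [<- _].
have ex21 : forall e', e' \in C2 -> lab e' != eps -> exists2 e, e \in C1 & lab e' = lab e.
  move=> e He Hl.
  have : lab e \in word (sort (fun x y : E1 => npred x <= npred y) (enum C1)) by rewrite -Hw; apply: in_word => //; case: Ht2 => _ [-> _].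
  by case/word_in => e' He' <-; exists e' => //; case: Ht1 => _ [<- _].
pose phi := fun e : E1 => odflt (bot E2) [pick e' in C2 | lab e' == lab e].
have phiP : forall e, e \in C1 -> phi e \in C2 /\ lab (phi e) = lab e.
  move=> e He; rewrite /phi; case: pickP => [e' /andP[H1 /eqP H2]|H] //.
  by case: (ex12 e He) => e' H1 H2; move: (H e'); rewrite H1 H2 eqxx.
exists phi; split; [|split; [|split]].
- move=> x y Hx Hy Hxy; apply: inj1 => //.
  by rewrite -(phiP x Hx).2 -(phiP y Hy).2 Hxy.
- apply/setP => z; apply/imsetP/idP => [[e He ->]|Hz]; first by case: (phiP e He).
  have [Hl|Hl] := eqVneq (lab z) eps.
    exists (bot E1) => //; rewrite (eps2 z Hz Hl); apply/esym/eps2; first by case: (phiP _ b1).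
    by rewrite (phiP _ b1).2 bot_lab.
  case: (ex21 z Hz Hl) => e He Hze; exists e => //.
  by apply: inj2 => //; [case: (phiP e He)| rewrite (phiP e He).2].
- by move=> e He; rewrite (phiP e He).2.
move=> e1 e2 H1 H2 Hlt; apply/negPn/negP => Hn.
have [Hee|Hne] := eqVneq e1 e2.
  by move: Hlt; rewrite Hee (negbTE (lt_irr _)).
have Hp2 : phi e2 != bot E2 by apply: contraTneq Hlt => ->; rewrite lt_bot.
have Hl2 : lab e2 != eps.
  apply: contraNneq Hp2 => Hl; move: (phiP e2 H2) => [P L]; have Hb : phi e2 = bot E2 := eps2 _ P (etrans L Hl); by rewrite Hb eqxx.
have Hl1 : lab e1 != eps.
  apply/negP => /eqP Hl; have Hb := eps1 e1 H1 Hl.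
  move: Hn; rewrite Hb bot_least //; by rewrite -Hb eq_sym.
pose A := [set x in C1 | (x == e2) || lt_ev x e2].
pose key x := if x \in A then npred x else #|E1|.+1 + npred x.
have Hle : forall x : E1, npred x <= #|E1| by move=> x; apply: max_card.
have Hkey : forall x y, lt_ev x y -> key x < key y.
  move=> x y Hxy; rewrite /key.
  case: Hm1 => [[Hlc _] _].
  have [Hy|Hy] := boolP (y \in A).
    have Hx : x \in A.
      move: Hy; rewrite !inE => /andP[Hy /orP[/eqP Hy2|Hy2]].
        by rewrite (Hlc _ _ Hy Hxy) -Hy2 Hxy orbT.
      by rewrite (Hlc _ _ Hy Hxy) (lt_trans Hxy Hy2) orbT.
    by rewrite Hx; apply: npred_lt.
  have [Hx|Hx] := boolP (x \in A).
    by apply: leq_ltn_trans (Hle x) _; rewrite ltnS leq_addr.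
  by rewrite ltn_add2l; apply: npred_lt.
have [Ht Hidx] := trace_of_key C1 Hkey.
set t := sort _ _ in Ht Hidx.
have Hi12 : index e2 t < index e1 t.
  apply: Hidx => //; rewrite /key.
  have -> : e2 \in A by rewrite !inE H2 eqxx.
  have -> : e1 \in A = false by rewrite !inE H1 (negbTE Hne) (negbTE Hn).
  by apply: leq_ltn_trans (Hle e2) _; rewrite ltnS leq_addr.
have Hmt : forall e, (e \in t) = (e \in C1) by case: Ht => _ [].
have W1 := word_index (uniq_word inj1 Ht) _ _ Hl2 Hl1 Hi12.
rewrite !Hmt in W1; have {W1} W1 := W1 H2 H1.
have [t' [Ht' Hw']] := HL _ (ex_intro _ t (conj Ht erefl)).
case: (phiP e1 H1) => P1 L1; case: (phiP e2 H2) => P2 L2.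
have Hmt' : forall e, (e \in t') = (e \in C2) by case: Ht' => _ [].
have Hi' : index (phi e1) t' < index (phi e2) t'.
  case: Ht' => _ [_ Ho]; apply: (Ho (bot E2)); rewrite ?index_mem ?Hmt' //.
  by rewrite !nth_index ?Hmt'.
have W2 := word_index (uniq_word inj2 Ht') _ _ _ _ Hi'.
rewrite !Hmt' L1 L2 Hw' in W2; have {W2} W2 := W2 P1 P2 Hl1 Hl2.
by move: (ltn_trans W1 W2); rewrite ltnn.
Qed.
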